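(* For every $\varepsilon>0$ and every $M>0$ there exists a function $\phi:\mathbb{R}\to\mathbb{R}$ generated by a $\widetilde{\sigma}$-activated network with width $50$ and depth $6$ such that $|\phi(x)-\sigma(x)|<\varepsilon$ for all $x\in[-M,M]$.
   Context: Let $\sigma_1:\mathbb{R}\to\mathbb{R}$ be the continuous triangular-wave function of period $2$: $\sigma_1(x)=|x|$ for $x\in[-1,1]$, $\sigma_1(x+2)=\sigma_1(x)$. Let $\sigma(x)=\sigma_1(x)$ for $x\ge0$ and $\sigma(x)=x/(|x|+1)$ for $x<0$. Define $\widetilde{\sigma}(x)=\frac{x}{-x+1}$ for $x\le 0$ and $\widetilde{\sigma}(x)=\int_0^x\frac{c\,\sigma(t)+1}{(2t+1)^2}\,dt$ for $x>0$, where $c=\big(2\int_0^\infty\frac{\sigma(t)}{(2t+1)^2}dt\big)^{-1}$. For an activation $\eta$ (applied entrywise), a function generated by an $\eta$-activated network with one input, width $N$ and depth $L$ is a function of the form $\mathcal{L}_{\ell}\circ\eta\circ\mathcal{L}_{\ell-1}\circ\cdots\circ\eta\circ\mathcal{L}_0$ with $\ell\le L$ hidden layers, affine maps $\mathcal{L}_i$, $\mathcal{L}_0$ with domain $\mathbb{R}$, $\mathcal{L}_\ell$ with codomain $\mathbb{R}$, and at most $N$ neurons in each hidden layer. *)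

(* Defs.v *)
From Stdlib Require Import Reals List.
From Coquelicot Require Import Coquelicot.
Open Scope R_scope.

(* Int_part r is the floor of r (Stdlib: Int_part r = up r - 1, IZR (up r) in (r, r+1]). *)
(* triangular wave of period 2, equal to |x| on [-1,1] *)
Definition sigma1 (x : R) : R := Rabs (x - 2 * IZR (Int_part ((x + 1) / 2))).

Definition sigma_act (x : R) : R :=
  if Rle_dec 0 x then sigma1 x else x / (Rabs x + 1).

Definition c_const : R :=
  / (2 * RInt_gen (fun t => sigma_act t / (2 * t + 1) ^ 2)
                  (at_point 0) (Rbar_locally p_infty)).

Definition sigma_tilde (x : R) : R :=
  if Rle_dec x 0 then x / (- x + 1)
  else RInt (fun t => (c_const * sigma_act t + 1) / (2 * t + 1) ^ 2) 0 x.

Fixpoint rsum (m : nat) (f : nat -> R) : R :=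
  match m with O => 0 | S k => rsum k f + f k end.

(* affine map R^m -> R^n, vectors as nat -> R (coordinates >= dimension unused) *)
Definition affine (m : nat) (W : nat -> nat -> R) (b : nat -> R) (v : nat -> R)
  : nat -> R := fun j => rsum m (fun k => W j k * v k) + b j.

(* a hidden layer: (output width n, weights W, bias b); the affine map is
   followed by the entrywise activation *)
Definition layer := (nat * (nat -> nat -> R) * (nat -> R))%type.

Fixpoint eval_hidden (act : R -> R) (d : nat) (ls : list layer) (v : nat -> R)
  : nat * (nat -> R) :=
  match ls with
  | nil => (d, v)
  | (n, W, b) :: ls' => eval_hidden act n ls' (fun j => act (affine d W b v j))
  end.

Definition net_eval (act : R -> R) (ls : list layer) (wo : nat -> R) (bo : R)
  (x : R) : R :=
  let '(d, v) := eval_hidden act 1 ls (fun _ => x) in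
  rsum d (fun k => wo k * v k) + bo.

Definition nn_generated (act : R -> R) (N L : nat) (phi : R -> R) : Prop :=
  exists (ls : list layer) (wo : nat -> R) (bo : R),
    (length ls <= L)%nat /\
    List.Forall (fun l : layer => let (p, _) := l in let (n, _) := p in (n <= N)%nat) ls /\
    forall x, phi x = net_eval act ls wo bo x.

(* Main.v *)
Require Import Defs.
From Stdlib Require Import Reals Lra Lia ZArith Classical List.
From Coquelicot Require Import Coquelicot.
Open Scope R_scope.


Ltac rabs := unfold Rabs in *; repeat match goal with |- context [Rcase_abs ?x] => destruct (Rcase_abs x) end;
  repeat match goal with H : context [Rcase_abs ?x] |- _ => destruct (Rcase_abs x) end; try lra.

Lemma away_int : forall v (m : Z), Rabs v <= 1 -> Rabs v <= Rabs (v - 2 * IZR m).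
Proof.
  intros v m Hv.
  assert (Hm : (m <= -1)%Z \/ m = 0%Z \/ (1 <= m)%Z) by lia.
  destruct Hm as [Hm|[Hm|Hm]].
  - apply IZR_le in Hm. rabs.
  - subst. simpl. replace (v - 2*0) with v by ring. lra.
  - apply IZR_le in Hm. rabs.
Qed.

Definition k0 (x : R) : Z := Int_part ((x + 1) / 2).

Lemma k0_bounds : forall x, -1 <= x - 2 * IZR (k0 x) < 1.
Proof.
  intros x. unfold k0. destruct (base_Int_part ((x+1)/2)) as [H1 H2]. lra.
Qed.

Lemma sig1_eq : forall x, sigma1 x = Rabs (x - 2 * IZR (k0 x)).
Proof. reflexivity. Qed.

Lemma sig1_min : forall x (k : Z), sigma1 x <= Rabs (x - 2 * IZR k).
Proof.
  intros x k. rewrite sig1_eq.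
  replace (x - 2 * IZR k) with ((x - 2 * IZR (k0 x)) - 2 * IZR (k - k0 x)) by (rewrite minus_IZR; ring).
  apply away_int. pose proof (k0_bounds x). rabs.
Qed.

Lemma sig1_bnd : forall x, 0 <= sigma1 x <= 1.
Proof. intros x. rewrite sig1_eq. pose proof (k0_bounds x). rabs. Qed.

Lemma sig1_lip : forall x y, Rabs (sigma1 x - sigma1 y) <= Rabs (x - y).
Proof.
  intros x y.
  assert (A : sigma1 x <= Rabs (x - y) + sigma1 y).
  { pose proof (sig1_min x (k0 y)). rewrite (sig1_eq y).
    pose proof (Rabs_triang (x - y) (y - 2 * IZR (k0 y))).
    replace (x - y + (y - 2 * IZR (k0 y))) with (x - 2 * IZR (k0 y)) in H0 by ring. lra. }
  assert (B : sigma1 y <= Rabs (x - y) + sigma1 x).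
  { pose proof (sig1_min y (k0 x)). rewrite (sig1_eq x).
    pose proof (Rabs_triang (y - x) (x - 2 * IZR (k0 x))).
    replace (y - x + (x - 2 * IZR (k0 x))) with (y - 2 * IZR (k0 x)) in H0 by ring.
    rewrite (Rabs_minus_sym y x) in H0. lra. }
  rabs.
Qed.

Lemma sig1_abs : forall x, Rabs x <= 1 -> sigma1 x = Rabs x.
Proof.
  intros x Hx. apply Rle_antisym.
  - pose proof (sig1_min x 0). simpl in H. replace (x - 2*0) with x in H by ring. exact H.
  - rewrite sig1_eq. apply away_int. exact Hx.
Qed.

Lemma sig1_per : forall x (n : Z), sigma1 (x + 2 * IZR n) = sigma1 x.
Proof.
  intros x n. apply Rle_antisym.
  - pose proof (sig1_min (x + 2 * IZR n) (k0 x + n)). rewrite plus_IZR in H.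
    rewrite sig1_eq. replace (x + 2 * IZR n - 2 * (IZR (k0 x) + IZR n)) with (x - 2 * IZR (k0 x)) in H by ring. exact H.
  - pose proof (sig1_min x (k0 (x + 2 * IZR n) - n)). rewrite minus_IZR in H.
    rewrite (sig1_eq (x + 2 * IZR n)).
    replace (x - 2 * (IZR (k0 (x + 2 * IZR n)) - IZR n)) with (x + 2 * IZR n - 2 * IZR (k0 (x + 2 * IZR n))) in H by ring. exact H.
Qed.

Lemma sig1_cont : forall x, continuous sigma1 x.
Proof.
  intros x. apply continuity_pt_filterlim.
  intros eps Heps. exists eps. split; auto.
  intros y [_ Hy]. simpl in *. unfold R_dist in *.
  pose proof (sig1_lip y x). lra.
Qed.

Lemma sact_pos : forall x, 0 <= x -> sigma_act x = sigma1 x.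
Proof. intros x Hx. unfold sigma_act. destruct (Rle_dec 0 x); [reflexivity| lra]. Qed.

Lemma sact_neg : forall x, x <= 0 -> sigma_act x = x / (1 - x).
Proof.
  intros x Hx. unfold sigma_act. destruct (Rle_dec 0 x).
  - assert (x = 0) by lra. subst. unfold Rdiv. rewrite Rmult_0_l. replace (Rabs 0) with 0 by (rewrite Rabs_R0; auto).
    rewrite sig1_abs; rewrite Rabs_R0; lra.
  - rewrite Rabs_left by lra. f_equal; ring.
Qed.

Lemma stilde_neg : forall z, z <= 0 -> sigma_tilde z = z / (1 - z).
Proof.
  intros z Hz. unfold sigma_tilde. destruct (Rle_dec z 0); [|lra]. f_equal; ring.
Qed.

Lemma G1_cont : forall a b z, 0 <= z ->
  continuous (fun t => (a * sigma1 t + b) * / ((2*t+1)*(2*t+1))) z.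
Proof.
  intros a b z Hz.
  apply (continuous_mult (K:=R_AbsRing) (fun t => a * sigma1 t + b) (fun t => / ((2*t+1)*(2*t+1)))).
  - apply (continuous_plus (V:=R_NormedModule) (fun t => a * sigma1 t) (fun _ => b)).
    + apply (continuous_mult (K:=R_AbsRing) (fun _ => a) sigma1).
      * apply continuous_const.
      * apply sig1_cont.
    + apply continuous_const.
  - apply (continuous_Rinv_comp (fun t => (2*t+1)*(2*t+1))).
    + assert (Hl : continuous (fun t : R => 2*t+1) z).
      { apply (continuous_plus (V:=R_NormedModule) (fun t => 2*t) (fun _ => 1)).
        apply (continuous_mult (K:=R_AbsRing) (fun _ => 2) (fun t => t)).
        apply continuous_const. apply continuous_id. apply continuous_const. }
      apply (continuous_mult (K:=R_AbsRing) (fun t => 2*t+1) (fun t => 2*t+1)); auto.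
    + nra.
Qed.

Lemma ex_RInt_G : forall a b u v, 0 <= u -> 0 <= v ->
  ex_RInt (fun t => (a * sigma_act t + b) / (2*t+1)^2) u v.
Proof.
  intros a b u v Hu Hv.
  apply ex_RInt_ext with (f := fun t => (a * sigma1 t + b) * / ((2*t+1)*(2*t+1))).
  - intros x Hx. assert (0 <= x) by (pose proof (Rmin_glb u v 0); unfold Rmin in *; destruct Rle_dec; lra).
    rewrite sact_pos by lra. unfold Rdiv. f_equal. f_equal. ring.
  - apply (ex_RInt_continuous (V:=R_CompleteNormedModule)). intros z Hz. apply G1_cont.
    unfold Rmin in Hz; destruct Rle_dec; lra.
Qed.

Definition fI (t : R) : R := sigma_act t / (2 * t + 1) ^ 2.
Definition FI (b : R) : R := RInt fI 0 b.

Lemma ex_fI : forall u v, 0 <= u -> 0 <= v -> ex_RInt fI u v.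
Proof.
  intros u v Hu Hv. apply ex_RInt_ext with (f := fun t => (1 * sigma_act t + 0) / (2*t+1)^2).
  - intros x _. unfold fI. f_equal. ring.
  - apply ex_RInt_G; auto.
Qed.

Lemma fI_nonneg : forall t, 0 <= t -> 0 <= fI t.
Proof.
  intros t Ht. unfold fI. rewrite sact_pos by auto. pose proof (sig1_bnd t).
  apply Rmult_le_pos. lra. apply Rlt_le, Rinv_0_lt_compat. nra.
Qed.

Lemma FI_mono : forall a b, 0 <= a <= b -> FI a <= FI b.
Proof.
  intros a b Hab. unfold FI.
  rewrite <- (RInt_Chasles fI 0 a b) by (apply ex_fI; lra).
  assert (0 <= RInt fI a b).
  { apply RInt_ge_0. lra. apply ex_fI; lra. intros x Hx. apply fI_nonneg. lra. }
  simpl. unfold plus. simpl. lra.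
Qed.

Definition hI (t : R) : R := (0 * sigma1 t + 1) * / ((2*t+1)*(2*t+1)).

Lemma hI_int : forall b, 0 <= b -> is_RInt hI 0 b (/2 - / (2 * (2 * b + 1))).
Proof.
  intros b Hb.
  set (Fh := fun t => - / (2*(2*t+1))).
  assert (H : is_RInt hI 0 b (minus (Fh b) (Fh 0))).
  { apply (is_RInt_derive (V:=R_CompleteNormedModule) Fh hI 0 b).
    - intros x Hx. assert (0 <= x) by (unfold Rmin in Hx; destruct Rle_dec; lra).
      unfold Fh. auto_derive. lra. unfold hI. field. lra.
    - intros x Hx. apply G1_cont. unfold Rmin in Hx; destruct Rle_dec; lra. }
  replace (/2 - / (2 * (2 * b + 1))) with (minus (Fh b) (Fh 0)); auto.
  unfold Fh, minus, plus, opp; simpl. field; lra.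
Qed.

Lemma FI_bound : forall b, 0 <= b -> FI b <= /2.
Proof.
  intros b Hb. unfold FI.
  apply Rle_trans with (RInt hI 0 b).
  - apply RInt_le. auto. apply ex_fI; lra. eexists; apply hI_int; auto.
    intros x Hx. unfold fI, hI. rewrite sact_pos by lra. pose proof (sig1_bnd x).
    unfold Rdiv. replace ((2 * x + 1) ^ 2) with ((2*x+1)*(2*x+1)) by ring.
    assert (0 < / ((2*x+1)*(2*x+1))) by (apply Rinv_0_lt_compat; nra). nra.
  - rewrite (is_RInt_unique _ _ _ _ (hI_int b Hb)).
    assert (0 < / (2 * (2 * b + 1))) by (apply Rinv_0_lt_compat; lra). lra.
Qed.

Lemma FI1_pos : 1/36 <= FI 1.
Proof.
  unfold FI. rewrite <- (RInt_Chasles fI 0 (1/2) 1) by (apply ex_fI; lra).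
  assert (0 <= RInt fI 0 (1/2)).
  { apply RInt_ge_0. lra. apply ex_fI; lra. intros x Hx. apply fI_nonneg. lra. }
  assert (1/36 <= RInt fI (1/2) 1).
  { apply Rle_trans with (RInt (fun _ => 1/18) (1/2) 1).
    - rewrite RInt_const. unfold scal; simpl; unfold mult; simpl. lra.
    - apply RInt_le. lra. apply ex_RInt_const. apply ex_fI; lra.
      intros x Hx. unfold fI. rewrite sact_pos by lra. rewrite sig1_abs by (rewrite Rabs_right; lra).
      rewrite Rabs_right by lra.
      assert (Hp : (2*x+1)^2 <= 9) by nra.
      assert (Hq : /9 <= /((2*x+1)^2)) by (apply Rinv_le_contravar; nra).
      unfold Rdiv. nra. }
  simpl. unfold plus. simpl. lra.
Qed.

Definition EI (y : R) : Prop := exists b, 0 <= b /\ y = FI b.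

Lemma I_exists : { I : R | is_lub EI I }.
Proof.
  apply completeness.
  - exists (/2). intros y [b [Hb ->]]. apply FI_bound; auto.
  - exists (FI 0). exists 0. split; auto. lra.
Qed.

Definition Ival : R := proj1_sig I_exists.

Lemma Ival_gen : is_RInt_gen fI (at_point 0) (Rbar_locally p_infty) Ival.
Proof.
  pose proof (proj2_sig I_exists) as [Hub Hlub]. fold Ival in Hub, Hlub.
  intros P [eps HP].
  assert (Hb0 : exists b0, 0 <= b0 /\ Ival - eps < FI b0).
  { apply NNPP. intro Hn.
    assert (is_upper_bound EI (Ival - eps)).
    { intros y [b [Hb ->]]. apply Rnot_lt_le. intro Hc. apply Hn. exists b; auto. }
    apply Hlub in H. destruct eps; simpl in *; lra. }
  destruct Hb0 as [b0 [Hb0 Hlt]].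
  apply Filter_prod with (Q := fun a => a = 0) (R := fun b => b0 < b).
  - reflexivity.
  - exists b0. auto.
  - intros a b Ha Hb. simpl. subst a. exists (FI b). split.
    + unfold FI. apply (RInt_correct (V:=R_CompleteNormedModule)). apply ex_fI; lra.
    + apply HP. assert (FI b0 <= FI b) by (apply FI_mono; lra).
      assert (FI b <= Ival) by (apply Hub; exists b; split; auto; lra).
      unfold ball; simpl. unfold AbsRing_ball, abs, minus, plus, opp; simpl.
      rewrite Rabs_left1 by lra. lra.
Qed.

Lemma Ival_pos : 1/36 <= Ival.
Proof.
  pose proof (proj2_sig I_exists) as [Hub _]. fold Ival in Hub.
  pose proof FI1_pos. assert (FI 1 <= Ival) by (apply Hub; exists 1; split; auto; lra). lra.
Qed.

Lemma c_pos : 0 < c_const.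
Proof.
  unfold c_const.
  change (fun t => sigma_act t / (2 * t + 1) ^ 2) with fI.
  rewrite (is_RInt_gen_unique _ _ Ival_gen).
  pose proof Ival_pos. apply Rinv_0_lt_compat. lra.
Qed.

Definition Gt (t : R) : R := (c_const * sigma_act t + 1) / (2 * t + 1) ^ 2.
Definition Lc : R := c_const + 4 * (c_const + 1).

Lemma stilde_pos : forall y, 0 <= y -> sigma_tilde y = RInt Gt 0 y.
Proof.
  intros y Hy. unfold sigma_tilde. destruct (Rle_dec y 0).
  - assert (y = 0) by lra. subst. rewrite RInt_point. unfold zero; simpl. field.
  - reflexivity.
Qed.

Lemma ex_Gt : forall u v, 0 <= u -> 0 <= v -> ex_RInt Gt u v.
Proof. intros. apply ex_RInt_G; auto. Qed.

Lemma q_lip : forall P Q, 1 <= P -> 1 <= Q ->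
  Rabs (/ P^2 - / Q^2) <= 2 * Rabs (P - Q).
Proof.
  intros P Q HP HQ.
  replace (/ P^2 - / Q^2) with ((Q - P) * ((P + Q) / (P^2 * Q^2))) by (field; lra).
  rewrite Rabs_mult. rewrite (Rabs_minus_sym Q P).
  assert (H : Rabs ((P + Q) / (P ^ 2 * Q ^ 2)) <= 2).
  { assert (HP2 : 1 <= P^2) by nra. assert (HQ2 : 1 <= Q^2) by nra.
    assert (HPQ : 1 <= P^2 * Q^2) by nra.
    rewrite Rabs_right.
    2:{ apply Rle_ge. unfold Rdiv. apply Rmult_le_pos. lra. apply Rlt_le, Rinv_0_lt_compat. lra. }
    apply Rmult_le_reg_r with (P^2 * Q^2). lra.
    unfold Rdiv. rewrite Rmult_assoc, Rinv_l by lra.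
    assert (P <= P^2*Q^2) by (assert (1 <= P*Q^2) by nra; nra).
    assert (Q <= P^2*Q^2) by (assert (1 <= Q*P^2) by nra; nra). nra. }
  pose proof (Rabs_pos (P - Q)). nra.
Qed.

Lemma Gt_lip : forall t y, 0 <= t -> 0 <= y -> Rabs (Gt t - Gt y) <= Lc * Rabs (t - y).
Proof.
  intros t y Ht Hy. pose proof c_pos as Hc. unfold Gt, Lc.
  rewrite !sact_pos by auto.
  pose proof (sig1_bnd t). pose proof (sig1_bnd y). pose proof (sig1_lip t y).
  pose proof (q_lip (2*t+1) (2*y+1) ltac:(lra) ltac:(lra)) as Hq.
  replace (2 * t + 1 - (2 * y + 1)) with (2 * (t - y)) in Hq by ring.
  rewrite Rabs_mult, (Rabs_right 2) in Hq by lra.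
  assert (Hqt : 0 < / (2*t+1)^2 <= 1).
  { split. apply Rinv_0_lt_compat. nra. rewrite <- Rinv_1. apply Rinv_le_contravar; nra. }
  unfold Rdiv.
  replace ((c_const * sigma1 t + 1) * / (2 * t + 1) ^ 2 - (c_const * sigma1 y + 1) * / (2 * y + 1) ^ 2)
    with (c_const * (sigma1 t - sigma1 y) * / (2 * t + 1) ^ 2 + (c_const * sigma1 y + 1) * (/ (2 * t + 1) ^ 2 - / (2 * y + 1) ^ 2)) by ring.
  eapply Rle_trans. apply Rabs_triang.
  rewrite !Rabs_mult. rewrite (Rabs_right c_const) by lra.
  rewrite (Rabs_right (/ (2*t+1)^2)) by lra.
  rewrite (Rabs_right (c_const * sigma1 y + 1)) by nra.
  pose proof (Rabs_pos (sigma1 t - sigma1 y)). pose proof (Rabs_pos (t - y)).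
  pose proof (Rabs_pos (/ (2 * t + 1) ^ 2 - / (2 * y + 1) ^ 2)).
  assert (c_const * Rabs (sigma1 t - sigma1 y) * / (2 * t + 1) ^ 2 <= c_const * Rabs (t - y)).
  { apply Rle_trans with (c_const * Rabs (sigma1 t - sigma1 y) * 1). apply Rmult_le_compat_l; nra. nra. }
  assert ((c_const * sigma1 y + 1) * Rabs (/ (2 * t + 1) ^ 2 - / (2 * y + 1) ^ 2) <= (c_const + 1) * (4 * Rabs (t - y))).
  { apply Rmult_le_compat; nra. }
  nra.
Qed.

Lemma deriv_approx : forall y h, 0 <= y -> 0 < h ->
  Rabs (sigma_tilde (y + h) - sigma_tilde y - h * Gt y) <= Lc * h^2.
Proof.
  intros y h Hy Hh.
  rewrite !stilde_pos by lra.
  rewrite <- (RInt_Chasles Gt 0 y (y+h)) by (apply ex_Gt; lra).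
  simpl. unfold plus; simpl.
  replace (RInt Gt 0 y + RInt Gt y (y + h) - RInt Gt 0 y - h * Gt y)
    with (RInt (fun t => Gt t - Gt y) y (y + h)).
  2:{ rewrite (RInt_minus (V:=R_CompleteNormedModule) Gt (fun _ => Gt y)) by (try apply ex_Gt; try apply ex_RInt_const; lra).
      rewrite RInt_const. unfold minus, plus, opp, scal; simpl. unfold mult; simpl. ring. }
  eapply Rle_trans.
  apply (abs_RInt_le_const _ y (y+h) (Lc * h)). lra.
  apply (ex_RInt_minus (V:=R_NormedModule) Gt (fun _ => Gt y)). apply ex_Gt; lra. apply ex_RInt_const.
  intros t Ht. eapply Rle_trans. apply Gt_lip; lra.
  apply Rmult_le_compat_l. unfold Lc; pose proof c_pos; lra. rabs.
  right. ring.
Qed.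

Lemma ratio_bound : forall a B u, 0 < B -> 8 * B <= a -> Rabs u <= B ->
  Rabs (a^2 / (a + 2*u)^2 - 1) <= 8 * B / a.
Proof.
  intros a B u HB Ha Hu.
  assert (Hu' : -B <= u <= B) by rabs.
  set (P := a + 2*u).
  assert (HP : 3 * a / 4 <= P) by (unfold P; lra).
  assert (Ha0 : 0 < a) by lra.
  assert (HP0 : 0 < P) by lra.
  replace (a^2 / P^2 - 1) with (- (2*u) * (a + P) / P^2) by (unfold P; field; lra).
  unfold Rdiv. rewrite !Rabs_mult. rewrite Rabs_Ropp.
  rewrite (Rabs_right (a+P)) by lra. rewrite (Rabs_right (/ P^2)).
  2:{ apply Rle_ge, Rlt_le, Rinv_0_lt_compat. nra. }
  assert (H2u : Rabs (2*u) <= 2*B) by rabs.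
  assert (Hk : (a + P) * / P^2 <= 4 * / a).
  { apply Rmult_le_reg_r with (P^2 * a). apply Rmult_lt_0_compat; [apply pow_lt|]; lra.
    replace ((a + P) * / P ^ 2 * (P ^ 2 * a)) with ((a+P)*a) by (field; lra).
    replace (4 * / a * (P ^ 2 * a)) with (4 * P^2) by (field; lra).
    nra. }
  assert (0 <= (a + P) * / P^2) by (apply Rmult_le_pos; [lra| apply Rlt_le, Rinv_0_lt_compat; nra]).
  pose proof (Rabs_pos (2*u)).
  apply Rle_trans with (2 * B * (4 * / a)).
  - rewrite Rmult_assoc. apply Rmult_le_compat; auto.
  - right. field. lra.
Qed.

Lemma SA : forall B d, 0 < B -> 0 < d -> exists A h, 0 < h /\ B <= A /\ forall u, Rabs u <= B ->
  Rabs (((2*A+1)^2 * (sigma_tilde (A + u + h) - sigma_tilde (A + u)) / h - 1) / c_const - sigma1 u) <= d.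
Proof.
  intros B d HB Hd.
  pose proof c_pos as Hc. set (c := c_const) in *.
  assert (HL : 0 < Lc) by (unfold Lc; fold c; lra).
  set (K := Rmax (8*B) (16*B*(c+1)/(d*c)) + B).
  destruct (archimed K) as [Hn _].
  set (A := 2 * IZR (up K)).
  set (a := 2*A+1).
  assert (HK1 : 8*B <= Rmax (8*B) (16*B*(c+1)/(d*c))) by apply Rmax_l.
  assert (HK2 : 16*B*(c+1)/(d*c) <= Rmax (8*B) (16*B*(c+1)/(d*c))) by apply Rmax_r.
  assert (HaK : K <= a) by (unfold a, A, K in *; lra).
  assert (Ha1 : 8*B <= a) by (unfold K in *; lra).
  assert (Ha2 : 16*B*(c+1)/(d*c) <= a) by (unfold K in *; lra).
  assert (HA : B <= A) by (unfold A, K in *; lra).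
  assert (Ha0 : 0 < a) by lra.
  set (h := d*c/(2 * a^2 * Lc)).
  assert (Hh : 0 < h) by (unfold h; apply Rdiv_lt_0_compat; [apply Rmult_lt_0_compat; lra | apply Rmult_lt_0_compat; [apply Rmult_lt_0_compat; [lra|apply pow_lt; lra]|lra]]).
  exists A, h. split; [auto|split; [auto|]].
  intros u Hu.
  assert (Hu' : -B <= u <= B) by rabs.
  set (y := A + u).
  assert (Hy : 0 <= y) by (unfold y; lra).
  pose proof (deriv_approx y h Hy Hh) as HD.
  set (E := (sigma_tilde (y + h) - sigma_tilde y) / h - Gt y).
  assert (HE : Rabs E <= Lc * h).
  { unfold E. replace ((sigma_tilde (y + h) - sigma_tilde y) / h - Gt y)
      with ((sigma_tilde (y + h) - sigma_tilde y - h * Gt y) * / h) by (field; lra).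
    rewrite Rabs_mult, (Rabs_right (/h)) by (apply Rle_ge, Rlt_le, Rinv_0_lt_compat; lra).
    apply Rmult_le_reg_r with h; auto. rewrite Rmult_assoc, Rinv_l by lra.
    replace (Lc * h * h) with (Lc * h^2) by ring. lra. }
  assert (HG : Gt y = (c * sigma1 u + 1) / (a + 2*u)^2).
  { unfold Gt. rewrite sact_pos by auto. fold c.
    replace y with (u + 2 * IZR (up K)) at 1 by (unfold y, A; ring).
    rewrite sig1_per. f_equal. unfold y, a. ring. }
  pose proof (sig1_bnd u) as Hs.
  set (s := sigma1 u) in *.
  fold a. replace (a ^ 2 * (sigma_tilde (y + h) - sigma_tilde y) / h) with (a^2 * (Gt y + E))
    by (unfold E, a, y; field; lra).
  rewrite HG.
  assert (HP : 0 < a + 2*u) by lra.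
  replace ((a ^ 2 * ((c * s + 1) / (a + 2 * u) ^ 2 + E) - 1) / c - s)
    with ((a^2 * E + (c*s+1) * (a^2 / (a + 2*u)^2 - 1)) * / c) by (field; lra).
  rewrite Rabs_mult, (Rabs_right (/c)) by (apply Rle_ge, Rlt_le, Rinv_0_lt_compat; lra).
  pose proof (ratio_bound a B u HB Ha1 Hu) as HR.
  assert (H1 : Rabs (a^2 * E) <= d * c / 2).
  { rewrite Rabs_mult, Rabs_right by nra.
    apply Rle_trans with (a^2 * (Lc * h)). apply Rmult_le_compat_l; nra.
    right. unfold h. field. split; lra. }
  assert (H2 : Rabs ((c*s+1) * (a^2 / (a + 2*u)^2 - 1)) <= d * c / 2).
  { rewrite Rabs_mult, (Rabs_right (c*s+1)) by nra.
    apply Rle_trans with ((c+1) * (8 * B / a)).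
    apply Rmult_le_compat; try nra. apply Rabs_pos.
    apply Rmult_le_reg_r with (a * (2 / (d*c))). apply Rmult_lt_0_compat; auto. apply Rdiv_lt_0_compat; nra.
    replace ((c + 1) * (8 * B / a) * (a * (2 / (d * c)))) with (16 * B * (c+1) / (d*c)) by (field; repeat split; lra).
    replace (d * c / 2 * (a * (2 / (d * c)))) with a by (field; split; lra). lra. }
  apply Rle_trans with (d * c * / c).
  - apply Rmult_le_compat_r. apply Rlt_le, Rinv_0_lt_compat; lra.
    eapply Rle_trans. apply Rabs_triang. lra.
  - right. field. lra.
Qed.

Definition mkL1 (w10 w11 w12 b10 b11 b12 : R) : layer :=
  (3%nat, (fun j k => match j with 0%nat => w10 | 1%nat => w11 | _ => w12 end),
   (fun j => match j with 0%nat => b10 | 1%nat => b11 | _ => b12 end)).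
Definition mkL2 (a0 a1 a2 b20 b21 b22 : R) : layer :=
  (3%nat, (fun j k => match j, k with
   | 0%nat, 0%nat => a0 | 0%nat, 1%nat => a1 | 0%nat, _ => a2
   | 1%nat, 0%nat => a0 | 1%nat, 1%nat => a1 | 1%nat, _ => a2
   | _, 0%nat => -a0 | _, 1%nat => -a1 | _, _ => a2 end),
   (fun j => match j with 0%nat => b20 | 1%nat => b21 | _ => b22 end)).
Definition mkO (o0 o1 o2 : R) : nat -> R := fun j => match j with 0%nat => o0 | 1%nat => o1 | _ => o2 end.

Lemma net_form : forall s w10 w11 w12 b10 b11 b12 a0 a1 a2 b20 b21 b22 o0 o1 o2 bo x,
  net_eval s (mkL1 w10 w11 w12 b10 b11 b12 :: mkL2 a0 a1 a2 b20 b21 b22 :: nil) (mkO o0 o1 o2) bo x =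
  o0 * s (a0 * s (w10 * x + b10) + a1 * s (w11 * x + b11) + a2 * s (w12 * x + b12) + b20) +
  o1 * s (a0 * s (w10 * x + b10) + a1 * s (w11 * x + b11) + a2 * s (w12 * x + b12) + b21) +
  o2 * s (- a0 * s (w10 * x + b10) + - a1 * s (w11 * x + b11) + a2 * s (w12 * x + b12) + b22) + bo.
Proof.
  intros. unfold net_eval, mkL1, mkL2, mkO, eval_hidden, affine. simpl.
  rewrite !Rplus_0_l. reflexivity.
Qed.

Lemma net_gen : forall s w10 w11 w12 b10 b11 b12 a0 a1 a2 b20 b21 b22 o0 o1 o2 bo,
  nn_generated s 50 6 (net_eval s (mkL1 w10 w11 w12 b10 b11 b12 :: mkL2 a0 a1 a2 b20 b21 b22 :: nil) (mkO o0 o1 o2) bo).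
Proof.
  intros. exists (mkL1 w10 w11 w12 b10 b11 b12 :: mkL2 a0 a1 a2 b20 b21 b22 :: nil), (mkO o0 o1 o2), bo.
  split; [simpl; lia|]. split; [|reflexivity].
  repeat constructor; simpl; lia.
Qed.

Lemma final_est : forall x M d aa ii S2 p q, 0 < d -> Rabs x <= M ->
  Rabs (aa - Rabs x) <= d -> Rabs (ii - x) <= d -> p = (ii + aa)/2 -> q = (ii - aa)/2 - d ->
  Rabs (S2 - sigma1 p) <= d -> Rabs (S2 + q / (1 - q) - sigma_act x) <= 4 * d.
Proof.
  intros x M d aa ii S2 p q Hd Hx Ha Hi Hp Hq HS.
  destruct (Rle_dec 0 x) as [Hx0|Hx0].
  - rewrite sact_pos by auto. rewrite (Rabs_right x) in Ha by lra.
    assert (Hpx : Rabs (p - x) <= d) by (subst; clear -Ha Hi; rabs).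
    pose proof (sig1_lip p x) as Hl.
    assert (Hq0 : -2*d <= q <= 0) by (subst; clear -Ha Hi Hd Hx0; rabs).
    assert (Hqq : Rabs (q / (1 - q)) <= 2 * d).
    { unfold Rdiv. rewrite Rabs_mult. rewrite (Rabs_right (/ (1-q))) by (apply Rle_ge, Rlt_le, Rinv_0_lt_compat; lra).
      assert (/ (1-q) <= 1) by (rewrite <- Rinv_1; apply Rinv_le_contravar; lra).
      assert (0 < / (1-q)) by (apply Rinv_0_lt_compat; lra).
      assert (Rabs q <= 2*d) by rabs. pose proof (Rabs_pos q). nra. }
    replace (S2 + q / (1 - q) - sigma1 x) with ((S2 - sigma1 p) + (sigma1 p - sigma1 x) + q / (1-q)) by ring.
    eapply Rle_trans. apply Rabs_triang. eapply Rle_trans. apply Rplus_le_compat_r. apply Rabs_triang. lra.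
  - rewrite sact_neg by lra. rewrite (Rabs_left x) in Ha by lra.
    assert (Hp0 : Rabs p <= d) by (subst; clear -Ha Hi Hx0; rabs).
    pose proof (sig1_min p 0) as Hm. simpl in Hm. replace (p - 2 * 0) with p in Hm by ring.
    pose proof (sig1_bnd p).
    assert (Hq0 : x - 2*d <= q <= x) by (subst; clear -Ha Hi Hd Hx0; rabs).
    assert (Hqq : Rabs (q / (1 - q) - x / (1 - x)) <= 2 * d).
    { replace (q / (1 - q) - x / (1 - x)) with ((q - x) * / ((1-q)*(1-x))) by (field; lra).
      rewrite Rabs_mult. rewrite (Rabs_right (/ ((1-q)*(1-x)))) by (apply Rle_ge, Rlt_le, Rinv_0_lt_compat; nra).
      assert (/ ((1-q)*(1-x)) <= 1) by (rewrite <- Rinv_1; apply Rinv_le_contravar; nra).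
      assert (0 < / ((1-q)*(1-x))) by (apply Rinv_0_lt_compat; nra).
      assert (Rabs (q-x) <= 2*d) by rabs. pose proof (Rabs_pos (q-x)). nra. }
    replace (S2 + q / (1 - q) - x / (1 - x)) with ((S2 - sigma1 p) + sigma1 p + (q / (1-q) - x / (1-x))) by ring.
    eapply Rle_trans. apply Rabs_triang. eapply Rle_trans. apply Rplus_le_compat_r. apply Rabs_triang.
    rewrite (Rabs_right (sigma1 p)) by lra. lra.
Qed.

Theorem lemma12 : forall eps M : R, 0 < eps -> 0 < M ->
  exists phi : R -> R, nn_generated sigma_tilde 50 6 phi /\
    forall x, -M <= x <= M -> Rabs (phi x - sigma_act x) < eps.
Proof.
  intros eps M Heps HM.
  set (d := eps / 8). assert (Hd : 0 < d) by (unfold d; lra).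
  destruct (SA 1 (d/M) ltac:(lra) ltac:(apply Rdiv_lt_0_compat; lra)) as [A1 [h1 [Hh1 [HA1 HS1]]]].
  destruct (SA (M + d) d ltac:(lra) Hd) as [A2 [h2 [Hh2 [HA2 HS2]]]].
  pose proof c_pos as Hc. set (c := c_const) in *.
  set (e := d / (M * (M + d))).
  assert (He : 0 < e) by (unfold e; apply Rdiv_lt_0_compat; nra).
  assert (HeM : e * M = d / (M + d)) by (unfold e; field; lra).
  assert (HeM1 : e * M < 1).
  { rewrite HeM. apply Rmult_lt_reg_r with (M + d). lra. unfold Rdiv. rewrite Rmult_assoc, Rinv_l by lra. lra. }
  assert (HeM2 : e * M * M <= d).
  { rewrite HeM. apply Rmult_le_reg_r with (M + d). lra.
    replace (d / (M + d) * M * (M + d)) with (d * M) by (field; lra). nra. }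
  set (K1 := M * (2*A1+1)^2 / (h1 * c)).
  set (K2 := (2*A2+1)^2 / (h2 * c)).
  set (be := 1/e - M/(2*c)).
  set (ga := 1/e + M/(2*c) - d).
  exists (net_eval sigma_tilde (mkL1 (/M) (/M) e (A1+h1) A1 (-1) :: mkL2 (K1/2) (-(K1/2)) (2/e) (A2+h2+be) (A2+be) ga :: nil) (mkO K2 (-K2) 1) (-/c)).
  split. apply net_gen.
  intros x Hx. rewrite net_form.
  assert (HxM : Rabs x <= M) by rabs.
  replace (/M * x + (A1+h1)) with (A1 + x/M + h1) by (field; lra).
  replace (/M * x + A1) with (A1 + x/M) by (field; lra).
  set (v0 := sigma_tilde (A1 + x/M + h1)).
  set (v1 := sigma_tilde (A1 + x/M)).
  set (v2 := sigma_tilde (e * x + -1)).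
  set (aa := M * (((2*A1+1)^2 * (v0 - v1) / h1 - 1) / c)).
  set (ii := 4 * (v2 + 1/2) / e).
  assert (Ha : Rabs (aa - Rabs x) <= d).
  { assert (Hu : Rabs (x/M) <= 1).
    { unfold Rdiv. rewrite Rabs_mult, (Rabs_right (/M)) by (apply Rle_ge, Rlt_le, Rinv_0_lt_compat; lra).
      apply Rmult_le_reg_r with M. lra. rewrite Rmult_assoc, Rinv_l by lra. lra. }
    pose proof (HS1 (x/M) Hu) as H. fold c v0 v1 in H.
    rewrite sig1_abs in H by auto.
    replace (aa - Rabs x) with (M * (((2 * A1 + 1) ^ 2 * (v0 - v1) / h1 - 1) / c - Rabs (x / M))).
    2:{ unfold aa. unfold Rdiv at 3. rewrite Rabs_mult, (Rabs_right (/M)) by (apply Rle_ge, Rlt_le, Rinv_0_lt_compat; lra). field. lra. }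
    rewrite Rabs_mult, (Rabs_right M) by lra.
    apply Rle_trans with (M * (d/M)). apply Rmult_le_compat_l; lra. right; field; lra. }
  assert (Hv2 : v2 = (e*x - 1) / (2 - e*x)).
  { unfold v2. rewrite stilde_neg. f_equal; ring.
    assert (e * x <= e * M) by (apply Rmult_le_compat_l; lra). lra. }
  assert (Hi : Rabs (ii - x) <= d).
  { assert (Hex : Rabs (e * x) <= e * M) by (rewrite Rabs_mult, (Rabs_right e) by lra; apply Rmult_le_compat_l; lra).
    assert (Hex' : e * x < 1) by rabs.
    replace (ii - x) with (e * x * x / (2 - e * x)) by (unfold ii; rewrite Hv2; field; lra).
    unfold Rdiv. rewrite Rabs_mult, (Rabs_right (/ (2 - e*x))) by (apply Rle_ge, Rlt_le, Rinv_0_lt_compat; lra).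
    assert (/ (2 - e*x) <= 1) by (rewrite <- Rinv_1; apply Rinv_le_contravar; lra).
    assert (0 < / (2 - e*x)) by (apply Rinv_0_lt_compat; lra).
    assert (Rabs (e * x * x) <= d).
    { rewrite Rabs_mult. pose proof (Rabs_pos x). pose proof (Rabs_pos (e*x)).
      apply Rle_trans with (e * M * M); auto. apply Rmult_le_compat; lra. }
    pose proof (Rabs_pos (e*x*x)). nra. }
  set (p := (ii + aa) / 2).
  set (q := (ii - aa) / 2 - d).
  assert (Hne : e <> 0) by lra. assert (Hnc : c <> 0) by lra. assert (Hnh : h1 <> 0) by lra.
  replace (K1 / 2 * v0 + - (K1 / 2) * v1 + 2 / e * v2 + (A2 + h2 + be)) with (A2 + p + h2)
    by (unfold p, ii, aa, K1, be; field; repeat split; lra).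
  replace (K1 / 2 * v0 + - (K1 / 2) * v1 + 2 / e * v2 + (A2 + be)) with (A2 + p)
    by (unfold p, ii, aa, K1, be; field; repeat split; lra).
  replace (- (K1 / 2) * v0 + - - (K1 / 2) * v1 + 2 / e * v2 + ga) with q
    by (unfold q, ii, aa, K1, ga; field; repeat split; lra).
  assert (Hq0 : q <= 0) by (unfold q, p in *; clear -Ha Hi Hd; rabs).
  assert (Hp : Rabs p <= M + d) by (unfold p in *; clear -Ha Hi Hd HxM; rabs).
  rewrite (stilde_neg q Hq0).
  set (S2 := ((2 * A2 + 1) ^ 2 * (sigma_tilde (A2 + p + h2) - sigma_tilde (A2 + p)) / h2 - 1) / c).
  replace (K2 * sigma_tilde (A2 + p + h2) + - K2 * sigma_tilde (A2 + p) + 1 * (q / (1 - q)) + - / c)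
    with (S2 + q / (1 - q)) by (unfold S2, K2; field; lra).
  pose proof (HS2 p Hp) as H2. fold c S2 in H2.
  pose proof (final_est x M d aa ii S2 p q Hd HxM Ha Hi eq_refl eq_refl H2).
  unfold d in *. lra.
Qed.
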